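(* Let $n\ge 2$ be an integer and let $f_n(t)=\dfrac{t^{n-1}}{(1-e^{-t})^2}$ for $t>0$. Then for every $a>0$, $$I_1(a;n):=\int_0^1\bigl[(2n-3)x^2-1\bigr]\,f_n\bigl(a(1+x)\bigr)\,f_n\bigl(a(1-x)\bigr)\,dx<0 .$$ *)

(* Defs.v *)
From Stdlib Require Import Reals.
From Coquelicot Require Import Coquelicot.
Open Scope R_scope.

Definition f_n (n : nat) (t : R) : R := t ^ (n - 1) / (1 - exp (- t)) ^ 2.

Definition I1_integrand (n : nat) (a x : R) : R :=
  ((2 * INR n - 3) * x ^ 2 - 1) * f_n n (a * (1 + x)) * f_n n (a * (1 - x)).

(* Main.v *)
From Stdlib Require Import Reals Lra Psatz.
Require Import Defs.
From Coquelicot Require Import Coquelicot.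
Open Scope R_scope.

Lemma incr_closed (f df : R -> R) (p q : R) : p < q ->
  (forall x, p < x < q -> is_derive f x (df x)) ->
  (forall x, p < x < q -> 0 < df x) ->
  (forall x, p <= x <= q -> continuous f x) -> f p < f q.
Proof.
  intros Hpq Hd Hpos Hc.
  assert (pr1 : forall c, p < c < q -> derivable_pt f c).
  { intros c Hc'. exists (df c). apply is_derive_Reals. now apply Hd. }
  assert (pr2 : forall c, p < c < q -> derivable_pt id c).
  { intros c Hc'. exists 1. apply derivable_pt_lim_id. }
  destruct (MVT f id p q pr1 pr2 Hpq) as [c [P HP]].
  - intros c Hc'. apply continuity_pt_filterlim. now apply Hc.
  - intros c Hc'. apply derivable_continuous_pt. apply derivable_pt_id.
  - assert (E1 : derive_pt f c (pr1 c P) = df c).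
    { apply derive_pt_eq_0. apply is_derive_Reals. now apply Hd. }
    assert (E2 : derive_pt id c (pr2 c P) = 1).
    { apply derive_pt_eq_0. apply derivable_pt_lim_id. }
    rewrite E1, E2 in HP. unfold id in HP.
    specialize (Hpos c P). nra.
Qed.

Lemma sinh_gt (t : R) : 0 < t -> 2 * t < exp t - exp (- t).
Proof.
  intros Ht.
  set (f := fun s => exp s - exp (- s) - 2 * s).
  assert (H : f 0 < f t).
  { apply (incr_closed f (fun s => exp s + exp (-s) - 2)); auto.
    - intros x _. unfold f. auto_derive; auto. ring.
    - intros x [Hx _]. assert (E: exp (-x) = / exp x) by apply exp_Ropp.
      rewrite E. assert (1 < exp x). { rewrite <- exp_0. apply exp_increasing. lra. }
      assert (0 < exp x) by apply exp_pos.
      apply Rmult_lt_reg_r with (exp x); auto. field_simplify; try lra. nra.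
    - intros x _. apply (ex_derive_continuous (K:=R_AbsRing) (V:=R_NormedModule)). unfold f. auto_derive; auto. }
  unfold f in H. rewrite Ropp_0, exp_0 in H. lra.
Qed.

Definition kap (t : R) := 1 / (exp t - 1) - 1 / t.

Lemma exp_gt1 (t : R) : 0 < t -> 1 < exp t.
Proof. intros. rewrite <- exp_0. apply exp_increasing. lra. Qed.

Lemma kap_incr (s t : R) : 0 < s -> s < t -> kap s < kap t.
Proof.
  intros Hs Hst.
  apply (incr_closed kap (fun x => - exp x / (exp x - 1)^2 + 1 / x^2)); auto.
  - intros x Hx. assert (1 < exp x) by (apply exp_gt1; lra).
    unfold kap. auto_derive. repeat split; lra. field. split; lra.
  - intros x Hx. assert (0 < x) by lra.
    assert (H1 := sinh_gt (x/2) ltac:(lra)).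
    set (y := exp (x/2)) in *.
    assert (Ey : exp x = y * y). { unfold y. rewrite <- exp_plus. f_equal. lra. }
    assert (1 < y) by (apply exp_gt1; lra).
    rewrite exp_Ropp in H1. fold y in H1.
    assert (H2 : x * y < y * y - 1).
    { apply Rmult_lt_compat_r with (r := y) in H1; [|lra].
      replace ((y - / y) * y) with (y*y - 1) in H1 by (field; lra). lra. }
    rewrite Ey.
    assert (0 < y*y - 1) by nra.
    assert (x^2 * (y*y) < (y*y-1)^2).
    { replace (x^2*(y*y)) with ((x*y)^2) by ring. assert (0 < x*y) by nra. simpl. nra. }
    assert (0 < x^2) by nra. assert (0 < (y*y-1)^2) by nra.
    unfold Rdiv. 
    apply Rmult_lt_reg_r with (x^2 * (y*y-1)^2); [nra|].
    field_simplify; try lra.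
  - intros x Hx. apply (ex_derive_continuous (K:=R_AbsRing) (V:=R_NormedModule)).
    assert (1 < exp x) by (apply exp_gt1; lra).
    unfold kap. auto_derive. repeat split; lra.
Qed.

Definition rho (t : R) := if Req_EM_T t 0 then 1 else (1 - exp (- t)) / t.

Lemma rho_eq (t : R) : t <> 0 -> rho t = (1 - exp (- t)) / t.
Proof. intros H. unfold rho. destruct (Req_EM_T t 0); [contradiction|reflexivity]. Qed.

Lemma rho_pos (t : R) : 0 <= t -> 0 < rho t.
Proof.
  intros H. destruct (Req_dec t 0) as [->|Hn].
  - unfold rho. destruct (Req_EM_T 0 0); [lra|congruence].
  - rewrite rho_eq by auto. assert (exp (-t) < 1).
    { rewrite <- exp_0. apply exp_increasing. lra. }
    apply Rdiv_lt_0_compat; lra.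
Qed.

Lemma rho_loc (t : R) : 0 < t -> locally t (fun y => (1 - exp (- y)) / y = rho y).
Proof.
  intros Ht. exists (mkposreal t Ht). intros y Hy.
  change (Rabs (y - t) < t) in Hy. apply Rabs_def2 in Hy.
  rewrite rho_eq; auto. lra.
Qed.

Lemma rho_deriv (t : R) : 0 < t -> is_derive rho t (rho t * kap t).
Proof.
  intros Ht. apply (is_derive_ext_loc (fun y => (1 - exp (- y)) / y)).
  { apply rho_loc; auto. }
  assert (1 < exp t) by (apply exp_gt1; auto).
  rewrite rho_eq by lra. unfold kap.
  auto_derive. lra. rewrite exp_Ropp. field. repeat split; lra.
Qed.

Lemma rho_cont (t : R) : 0 <= t -> continuous rho t.
Proof.
  intros Ht. destruct (Req_dec t 0) as [->|Hn].
  - apply continuity_pt_filterlim.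
    assert (L : is_lim rho 0 1).
    { apply (is_lim_ext_loc (fun y => (exp (- y) - 1) / (- y))).
      { exists (mkposreal 1 Rlt_0_1). intros y _ Hy. rewrite rho_eq; auto.
        field. auto. }
      apply (is_lim_comp (fun y => (exp y - 1) / y) (fun y => - y) 0 1 0).
      - apply is_lim_div_expm1_0.
      - assert (H := is_lim_opp (fun y => y) 0 0 (is_lim_id 0)). simpl in H.
        replace (- 0) with 0 in H by ring. exact H.
      - exists (mkposreal 1 Rlt_0_1). intros y _ Hy. intro E. apply Hy. injection E. intro E2. change (y = 0). lra. }
    apply is_lim_Reals_0 in L.
    intros eps Heps. destruct (L eps Heps) as [alp [Ha Hb]].
    exists alp. split; auto. intros x [[_ Hx] Hd].
    assert (R0 : rho 0 = 1). { unfold rho. destruct (Req_EM_T 0 0); [auto|congruence]. }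
    rewrite R0. apply Hb. split; auto.
  - apply (ex_derive_continuous (K:=R_AbsRing) (V:=R_NormedModule)).
    exists (rho t * kap t). apply rho_deriv. lra.
Qed.

Definition Rr (a x : R) := rho (a * (1 + x)) * rho (a * (1 - x)).

Lemma Rr_pos (a x : R) : 0 < a -> 0 <= x <= 1 -> 0 < Rr a x.
Proof. intros. unfold Rr. apply Rmult_lt_0_compat; apply rho_pos; nra. Qed.

Lemma Rr_cont (a x : R) : 0 < a -> 0 <= x <= 1 -> continuous (Rr a) x.
Proof.
  intros Ha Hx. unfold Rr.
  apply (continuous_mult (fun z => rho (a * (1 + z))) (fun z => rho (a * (1 - z)))).
  - apply (continuous_comp (fun z => a * (1 + z)) rho).
    + apply (ex_derive_continuous (K:=R_AbsRing) (V:=R_NormedModule)). auto_derive. auto.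
    + apply rho_cont. nra.
  - apply (continuous_comp (fun z => a * (1 - z)) rho).
    + apply (ex_derive_continuous (K:=R_AbsRing) (V:=R_NormedModule)). auto_derive. auto.
    + apply rho_cont. nra.
Qed.

Lemma Rr_incr (a x y : R) : 0 < a -> 0 <= x -> x < y -> y <= 1 -> Rr a x < Rr a y.
Proof.
  intros Ha Hx Hxy Hy.
  apply (incr_closed (Rr a) (fun z => a * rho (a*(1+z)) * rho (a*(1-z)) *
            (kap (a*(1+z)) - kap (a*(1-z))))); auto.
  - intros z Hz.
    assert (D1 : is_derive (fun z => rho (a * (1 + z))) z (a * (rho (a*(1+z)) * kap (a*(1+z))))).
    { apply (is_derive_comp rho (fun z => a * (1 + z))).
      - apply rho_deriv. nra.
      - auto_derive. auto. ring. }
    assert (D2 : is_derive (fun z => rho (a * (1 - z))) z (- a * (rho (a*(1-z)) * kap (a*(1-z))))).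
    { apply (is_derive_comp rho (fun z => a * (1 - z))).
      - apply rho_deriv. nra.
      - auto_derive. auto. ring. }
    assert (D := is_derive_mult _ _ _ _ _ D1 D2 (fun n m => Rmult_comm n m)).
    cbv beta. replace (a * rho (a * (1 + z)) * rho (a * (1 - z)) * (kap (a * (1 + z)) - kap (a * (1 - z))))
      with (plus (mult (a * (rho (a*(1+z)) * kap (a*(1+z)))) (rho (a*(1-z))))
             (mult (rho (a*(1+z))) (- a * (rho (a*(1-z)) * kap (a*(1-z)))))).
    2: { unfold plus, mult; simpl. ring. }
    unfold Rr. eapply is_derive_ext. 2: exact D. intros t. reflexivity.
  - intros z Hz.
    assert (kap (a*(1-z)) < kap (a*(1+z))) by (apply kap_incr; nra).
    assert (0 < rho (a*(1+z))) by (apply rho_pos; nra).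
    assert (0 < rho (a*(1-z))) by (apply rho_pos; nra).
    apply Rmult_lt_0_compat; [|lra].
    apply Rmult_lt_0_compat; [|lra]. apply Rmult_lt_0_compat; lra.
  - intros z Hz. apply Rr_cont; auto. lra.
Qed.

Definition W (k : nat) (x : R) := (1 - x^2)^k - 2 * INR k * x^2 * (1 - x^2)^(k-1).
Definition P (k : nat) (x : R) := x * (1 - x^2)^k.

Lemma P_deriv (k : nat) (x : R) : is_derive (P k) x (W k x).
Proof.
  unfold P, W. auto_derive. auto. destruct k as [|k].
  - simpl. ring.
  - simpl (S k - 1)%nat. rewrite Nat.sub_0_r, S_INR. cbn [pow Init.Nat.pred]. replace (1 + - (x * (x * 1))) with (1 - x*(x*1)) by ring. ring.
Qed.

Lemma W_cont (k : nat) (x : R) : continuous (W k) x.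
Proof. apply (ex_derive_continuous (K:=R_AbsRing) (V:=R_NormedModule)). unfold W. auto_derive. auto. Qed.

Lemma ALG (k : nat) (a x : R) :
  ((2 * INR (S (S k)) - 3) * x^2 - 1) * ((a*(1+x))^(S k) * (a*(1-x))^(S k))
  = - (a^2)^(S k) * (1 - x^2)^2 * W k x.
Proof.
  rewrite <- Rpow_mult_distr.
  replace (a*(1+x)*(a*(1-x))) with (a^2*(1-x^2)) by ring.
  rewrite Rpow_mult_distr. unfold W.
  destruct k as [|k].
  - simpl. ring.
  - simpl (S k - 1)%nat. rewrite Nat.sub_0_r. rewrite !S_INR. simpl. ring.
Qed.

Definition g (k : nat) (a x : R) := W k x / (Rr a x * Rr a x).

Lemma integrand_eq (k : nat) (a x : R) : 0 < a -> 0 < x < 1 ->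
  I1_integrand (S (S k)) a x = - ((a^2)^(S k) / a^4) * g k a x.
Proof.
  intros Ha Hx. unfold I1_integrand, f_n, g, Rr.
  simpl (S (S k) - 1)%nat.
  assert (Hu : 0 < a * (1 + x)) by nra.
  assert (Hv : 0 < a * (1 - x)) by nra.
  assert (E1 : 1 - exp (- (a*(1+x))) = a*(1+x) * rho (a*(1+x))).
  { rewrite rho_eq by lra. field. lra. }
  assert (E2 : 1 - exp (- (a*(1-x))) = a*(1-x) * rho (a*(1-x))).
  { rewrite rho_eq by lra. field. lra. }
  rewrite E1, E2.
  assert (r1 := rho_pos (a*(1+x)) ltac:(lra)).
  assert (r2 := rho_pos (a*(1-x)) ltac:(lra)).
  set (r := rho (a*(1+x))) in *. set (s := rho (a*(1-x))) in *.
  assert (H := ALG k a x).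
  transitivity (((2 * INR (S (S k)) - 3) * x ^ 2 - 1) *
     ((a * (1 + x)) ^ S k * (a * (1 - x)) ^ S k) /
     ((a*(1+x)*r)^2 * (a*(1-x)*s)^2)).
  { field. repeat split; first [lra | (apply pow_nonzero; nra) | nra]. }
  rewrite H. field. repeat split; try lra; nra.
Qed.

Lemma g_cont (k : nat) (a x : R) : 0 < a -> 0 <= x <= 1 -> continuous (g k a) x.
Proof.
  intros Ha Hx. unfold g, Rdiv.
  apply (continuous_mult (W k) (fun y => / (Rr a y * Rr a y))).
  - apply W_cont.
  - apply (continuous_Rinv_comp (fun y => Rr a y * Rr a y)).
    + apply (continuous_mult (Rr a) (Rr a)); apply Rr_cont; auto.
    + assert (H := Rr_pos a x Ha Hx). nra.
Qed.

Lemma J_pos (k : nat) (a : R) : 0 < a -> 0 < RInt (g k a) 0 1.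
Proof.
  intros Ha.
  set (s := sqrt (2 * INR k + 1)).
  assert (Hk : 0 <= INR k) by apply pos_INR.
  assert (Hs2 : s * s = 2 * INR k + 1) by (apply sqrt_sqrt; lra).
  assert (Hs : 1 <= s).
  { assert (0 <= s) by apply sqrt_pos. nra. }
  set (x0 := / s).
  assert (Hx0 : 0 < x0 <= 1).
  { unfold x0. split. apply Rinv_0_lt_compat; lra.
    rewrite <- Rinv_1. apply Rinv_le_contravar; lra. }
  assert (Hx0s : x0 * s = 1) by (unfold x0; field; lra).
  set (h0 := / (Rr a x0 * Rr a x0)).
  assert (Wpos : forall x, 0 <= x < x0 -> 0 < W k x).
  { intros x Hx. unfold W. destruct k as [|k'].
    - simpl. lra.
    - simpl (S k' - 1)%nat. rewrite Nat.sub_0_r. rewrite S_INR in Hs2 |- *.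
      assert (0 < (1 - x^2)^k') by (apply pow_lt; nra).
      assert (x * s < 1) by nra.
      assert (x^2 * (s*s) < 1) by (assert (0 <= x * s) by nra; nra).
      cbn [pow]. cbn [pow] in *. nra. }
  assert (Wneg : forall x, x0 < x < 1 -> W k x < 0).
  { intros x Hx. unfold W. destruct k as [|k'].
    - simpl in Hs2. exfalso. assert (s = 1) by nra. unfold x0 in Hx. rewrite H in Hx.
      rewrite Rinv_1 in Hx. lra.
    - simpl (S k' - 1)%nat. rewrite Nat.sub_0_r. rewrite S_INR in Hs2 |- *.
      assert (0 < (1 - x^2)^k') by (apply pow_lt; nra).
      assert (x * s > 1) by nra.
      assert (x^2 * (s*s) > 1) by nra.
      cbn [pow]. cbn [pow] in *. nra. }
  assert (Rx0 := Rr_pos a x0 Ha ltac:(lra)).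
  assert (C1 : forall x, 0 <= x <= 1 -> continuous (g k a) x) by (intros; apply g_cont; auto).
  assert (C2 : forall x, continuous (fun y => h0 * W k y) x).
  { intros x. apply (continuous_mult (fun _ => h0) (W k)). apply continuous_const. apply W_cont. }
  assert (Ex1 : ex_RInt (g k a) 0 x0).
  { apply (ex_RInt_continuous (V:=R_CompleteNormedModule)). intros z Hz. apply C1.
    rewrite Rmin_left, Rmax_right in Hz; lra. }
  assert (Ex2 : ex_RInt (g k a) x0 1).
  { apply (ex_RInt_continuous (V:=R_CompleteNormedModule)). intros z Hz. apply C1.
    rewrite Rmin_left, Rmax_right in Hz; lra. }
  assert (Fx1 : ex_RInt (fun y => h0 * W k y) 0 x0) by (apply (ex_RInt_continuous (V:=R_CompleteNormedModule)); auto).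
  assert (Fx2 : ex_RInt (fun y => h0 * W k y) x0 1) by (apply (ex_RInt_continuous (V:=R_CompleteNormedModule)); auto).
  assert (L1 : RInt (fun y => h0 * W k y) 0 x0 < RInt (g k a) 0 x0).
  { apply RInt_lt; try lra.
    - intros; apply C1; lra.
    - intros; apply C2.
    - intros x Hx. unfold g. assert (Rr a x < Rr a x0) by (apply Rr_incr; lra).
      assert (Rpx := Rr_pos a x Ha ltac:(lra)).
      assert (h0 < / (Rr a x * Rr a x)).
      { unfold h0. apply Rinv_lt_contravar; [apply Rmult_lt_0_compat; apply Rmult_lt_0_compat; lra | apply Rmult_le_0_lt_compat; lra]. }
      assert (0 < W k x) by (apply Wpos; lra).
      unfold Rdiv. nra. }
  assert (L2 : RInt (fun y => h0 * W k y) x0 1 <= RInt (g k a) x0 1).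
  { apply RInt_le; auto; try lra.
    intros x Hx. unfold g. assert (Rr a x0 < Rr a x) by (apply Rr_incr; lra).
    assert (Rpx := Rr_pos a x Ha ltac:(lra)).
    assert (/ (Rr a x * Rr a x) < h0).
    { unfold h0. apply Rinv_lt_contravar; [apply Rmult_lt_0_compat; apply Rmult_lt_0_compat; lra | apply Rmult_le_0_lt_compat; lra]. }
    assert (W k x < 0) by (apply Wneg; lra).
    unfold Rdiv. nra. }
  assert (HW : is_RInt (W k) 0 1 (minus (P k 1) (P k 0))).
  { apply (is_RInt_derive (V:=R_CompleteNormedModule)). intros; apply P_deriv. intros; apply W_cont. }
  assert (HW2 : RInt (fun y => h0 * W k y) 0 1 = h0 * (P k 1 - P k 0)).
  { apply is_RInt_unique. exact (is_RInt_scal _ _ _ h0 _ HW). }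
  assert (Ch1 := RInt_Chasles (g k a) 0 x0 1 Ex1 Ex2).
  assert (Ch2 := RInt_Chasles (fun y => h0 * W k y) 0 x0 1 Fx1 Fx2).
  unfold plus in Ch1, Ch2; simpl in Ch1, Ch2.
  assert (P1 : 0 <= P k 1) by (unfold P; apply Rmult_le_pos; [lra|apply pow_le; lra]).
  assert (P0 : P k 0 = 0) by (unfold P; ring).
  assert (0 < h0) by (unfold h0; apply Rinv_0_lt_compat; nra).
  rewrite <- Ch1. nra.
Qed.

Theorem lemma3p1 (n : nat) (hn : (2 <= n)%nat) (a : R) (ha : 0 < a) :
  ex_RInt (I1_integrand n a) 0 1 /\ RInt (I1_integrand n a) 0 1 < 0.
Proof.
  destruct n as [|[|k]]; [lia|lia|].
  set (c := (a^2)^(S k) / a^4).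
  assert (Hc : 0 < c).
  { unfold c. apply Rdiv_lt_0_compat; apply pow_lt; try apply pow_lt; nra. }
  assert (Eq : forall x, Rmin 0 1 < x < Rmax 0 1 ->
     (fun y => scal (- c) (g k a y)) x = I1_integrand (S (S k)) a x).
  { intros x Hx. rewrite Rmin_left, Rmax_right in Hx by lra.
    rewrite integrand_eq by auto. reflexivity. }
  assert (Eg : ex_RInt (g k a) 0 1).
  { apply (ex_RInt_continuous (V:=R_CompleteNormedModule)). intros z Hz. apply g_cont; auto.
    rewrite Rmin_left, Rmax_right in Hz; lra. }
  assert (Hi := is_RInt_scal _ _ _ (- c) _ (RInt_correct _ _ _ Eg)).
  assert (Hi2 := is_RInt_ext _ _ _ _ _ Eq Hi).
  split.
  - eexists; exact Hi2.
  - rewrite (is_RInt_unique _ _ _ _ Hi2).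
    assert (J := J_pos k a ha). change (scal (- c) (RInt (g k a) 0 1)) with (- c * RInt (g k a) 0 1).
    nra.
Qed.
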